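(* Let $( f_u )_{u \in [u_1, u_2]}$ be a continuous strictly increasing family of circle homeomorphisms of the type $f_{\ell, \alpha, \theta}$, with $\rho_1 := \rho(f_{u_1}) < \rho_2 := \rho(f_{u_2})$. Here $\rho(f_u)$ is intended as the actual value of $\lim_{n\to\infty}(F_u^n(x)-x)/n$; in other words, $\rho(f_u)$ can take all real values. Then the function $\rho: [u_1, u_2] \to \mathbb{R}$, $\rho(u) := \rho(f_u)$, is an increasing devil's staircase (namely, an increasing, continuous, non-constant function that is constant on each interval of a family with dense union). This implies in particular that each rotation number in $[\rho_1, \rho_2]$ is realized by at least one $f_u$. Moreover, $\rho$ is constant on an interval if, and only if, the constant is $0$ or $p/q$, with $p,q$ coprime integers and $q$ odd.
   Context: Setting: $f_{\ell,\alpha,\theta}:\mathbb{T}\to\mathbb{T}$ ($\mathbb{T}=\mathbb{R}/\mathbb{Z}$) is the first-return map to a horizontal cross-section of length 1 of the unfolded unit-speed linear flow of the internal-wave billiard (reflection preserving angles with the vertical) in a rectangular trapezoid of height $1/2$, vertical left leg, shorter base $\ell>0$, slanted-leg angle $\alpha$, initial direction $\theta$ with $\alpha<\theta<\pi/2$; it is a piecewise-linear orientation-preserving circle homeomorphism with slopes $\Lambda^{\pm1}$, $\Lambda=\sin(\theta+\alpha)/\sin(\theta-\alpha)$, and two break points $a_0,a_1$ satisfying $f(a_j)=-a_j$. A family $(f_u)_{u\in[u_1,u_2]}$ of such maps is continuous strictly increasing if there are lifts $F_u:\mathbb{R}\to\mathbb{R}$ with $u\mapsto F_u$ continuous in sup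 norm and $u\mapsto F_u(x)$ strictly increasing for each $x$ (equivalently, the coordinates of the two break points are continuous strictly decreasing functions of $u$); examples are varying $\ell$, or varying $-\theta$, with the other parameters fixed. *)

(* Defs.v *)
From Stdlib Require Import Reals ZArith.
From Coquelicot Require Import Coquelicot.
Open Scope R_scope.

Fixpoint iterR (n : nat) (F : R -> R) (x : R) : R :=
  match n with
  | O => x
  | S m => F (iterR m F x)
  end.

(* The actual (real-valued, lift-dependent) rotation number of a lift F:
   the value of lim_{n->oo} (F^n(x) - x)/n, taken at x = 0. *)
Definition rot (F : R -> R) : R :=
  real (Lim_seq (fun n => (iterR n F 0 - 0) / INR n)).

Definition Lambda (alpha theta : R) : R :=
  sin (theta + alpha) / sin (theta - alpha).

Definition circle_homeo_lift (F : R -> R) : Prop :=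
  continuity F /\ (forall x y, x < y -> F x < F y) /\
  (forall x, F (x + 1) = F x + 1).

(* F is a lift of a map "of the type f_{l,alpha,theta}": a piecewise-linear
   orientation-preserving circle homeomorphism with slopes Lambda^{+-1},
   Lambda = sin(theta+alpha)/sin(theta-alpha) with 0 < alpha < theta < pi/2,
   and two break points a0, a1 with f(a_j) = -a_j (mod 1). *)
Definition trap_type (F : R -> R) : Prop :=
  exists alpha theta a0 a1 : R,
    0 < alpha /\ alpha < theta /\ theta < PI / 2 /\
    circle_homeo_lift F /\
    a0 < a1 /\ a1 < a0 + 1 /\
    (forall x y, a0 <= x <= a1 -> a0 <= y <= a1 ->
       F y - F x = Lambda alpha theta * (y - x)) /\
    (forall x y, a1 <= x <= a0 + 1 -> a1 <= y <= a0 + 1 ->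
       F y - F x = (y - x) / Lambda alpha theta) /\
    (exists k0 : Z, F a0 = - a0 + IZR k0) /\
    (exists k1 : Z, F a1 = - a1 + IZR k1).

Definition devils_staircase (g : R -> R) (a b : R) : Prop :=
  (forall x y, a <= x -> x <= y -> y <= b -> g x <= g y) /\
  (forall x, a <= x <= b -> forall eps, 0 < eps -> exists delta, 0 < delta /\
     forall y, a <= y <= b -> Rabs (y - x) < delta -> Rabs (g y - g x) < eps) /\
  (exists x y, a <= x <= b /\ a <= y <= b /\ g x <> g y) /\
  (* the union of the nondegenerate intervals on which g is constant is
     dense in [a,b] *)
  (forall x, a <= x <= b -> forall eps, 0 < eps ->
     exists c d, a <= c /\ c < d /\ d <= b /\
       (forall y, c <= y <= d -> g y = g c) /\
       exists z, c <= z <= d /\ Rabs (z - x) < eps).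

Definition odd_den_rational (r : R) : Prop :=
  r = 0 \/ exists p q : Z, Z.gcd p q = 1%Z /\ Z.odd q = true /\ r = IZR p / IZR q.

(* Main.v *)
Require Import Defs.
From Stdlib Require Import Reals ZArith.
From Coquelicot Require Import Coquelicot.
From Stdlib Require Import Lra Lia Classical.
Open Scope R_scope.

Definition fl (x : R) : Z := (up x - 1)%Z.
Lemma fl_spec x : IZR (fl x) <= x < IZR (fl x) + 1.
Proof. unfold fl. rewrite minus_IZR. destruct (archimed x). lra. Qed.

Lemma per_nat (h : R -> R) c : (forall x, h (x + 1) = h x + c) ->
  forall n x, h (x + INR n) = h x + INR n * c.
Proof.
  intros H n; induction n as [|n IH]; intro x.
  - change (INR 0) with 0. rewrite Rplus_0_r; ring.
  - rewrite S_INR. replace (x + (INR n + 1)) with ((x + INR n) + 1) by ring.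
    rewrite H, IH; ring.
Qed.

Lemma per_Z (h : R -> R) c : (forall x, h (x + 1) = h x + c) ->
  forall k x, h (x + IZR k) = h x + IZR k * c.
Proof.
  intros H k x. destruct (Z_le_gt_dec 0 k) as [Hk|Hk].
  - replace k with (Z.of_nat (Z.to_nat k)) by lia.
    rewrite <- INR_IZR_INZ. apply per_nat; auto.
  - replace k with (- Z.of_nat (Z.to_nat (- k)))%Z by lia.
    rewrite opp_IZR, <- INR_IZR_INZ.
    set (m := INR (Z.to_nat (-k))).
    pose proof (per_nat h c H (Z.to_nat (-k)) (x - m)) as E.
    fold m in E. replace (x - m + m) with x in E by ring.
    replace (x + - m) with (x - m) by ring. lra.
Qed.

Lemma lift_Z F : circle_homeo_lift F -> forall k x, F (x + IZR k) = F x + IZR k.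
Proof.
  intros [_ [_ H]] k x. rewrite (per_Z F 1 H). ring.
Qed.

Lemma lift_le F : circle_homeo_lift F -> forall x y, x <= y -> F x <= F y.
Proof.
  intros [_ [H _]] x y Hxy. destruct (Rle_lt_or_eq_dec x y Hxy) as [h|h].
  - left; auto.
  - subst; lra.
Qed.

Lemma it_add n m F x : iterR (m + n) F x = iterR m F (iterR n F x).
Proof. induction m; simpl; auto. rewrite IHm; auto. Qed.

Lemma it_comm n m F x : iterR m F (iterR n F x) = iterR n F (iterR m F x).
Proof. rewrite <- !it_add. rewrite Nat.add_comm. auto. Qed.

Lemma it_S n F x : iterR (S n) F x = iterR n F (F x).
Proof. replace (S n) with (n + 1)%nat by lia. rewrite it_add. auto. Qed.

Lemma it_lift F : circle_homeo_lift F -> forall n, circle_homeo_lift (iterR n F).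
Proof.
  intros HF n. destruct HF as [Hc [Hm Hp]].
  induction n as [|n [IHc [IHm IHp]]]; repeat split; simpl.
  - intros x. apply continuity_pt_id.
  - auto.
  - auto.
  - intro x. apply (continuity_comp (iterR n F) F); auto.
  - intros; apply Hm, IHm; auto.
  - intro x. rewrite IHp, Hp. auto.
Qed.

Lemma osc G : circle_homeo_lift G -> forall x y,
  Rabs ((G y - y) - (G x - x)) <= 1.
Proof.
  intros HG x y. set (k := fl (y - x)). destruct (fl_spec (y - x)) as [h1 h2]. fold k in h1, h2.
  set (y' := y - IZR k).
  assert (Ey : G y = G y' + IZR k).
  { unfold y'. rewrite <- (lift_Z G HG). f_equal; ring. }
  assert (A1 : G x <= G y') by (apply (lift_le G HG); unfold y'; lra).
  assert (A2 : G y' <= G x + 1).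
  { replace (G x + 1) with (G (x + IZR 1)) by (rewrite (lift_Z G HG); auto).
    apply (lift_le G HG); unfold y'; simpl; lra. }
  apply Rabs_le. rewrite Ey. unfold y' in *. lra.
Qed.

Section Rot.
Variable F : R -> R.
Hypothesis HF : circle_homeo_lift F.
Let a n := iterR n F 0.

Lemma a_sub m n : Rabs (a (m + n) - a m - a n) <= 1.
Proof.
  unfold a. rewrite it_add.
  pose proof (osc (iterR m F) (it_lift F HF m) 0 (iterR n F 0)) as H.
  replace (iterR m F (iterR n F 0) - iterR m F 0 - iterR n F 0) with
    (iterR m F (iterR n F 0) - iterR n F 0 - (iterR m F 0 - 0)) by ring. auto.
Qed.

Lemma a_mult k n : Rabs (a (k * n) - INR k * a n) <= INR k.
Proof.
  induction k as [|k IH].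
  - simpl. unfold a; simpl. rewrite Rmult_0_l, Rminus_0_r, Rabs_R0; lra.
  - replace (S k * n)%nat with (n + k * n)%nat by lia.
    rewrite S_INR. pose proof (a_sub n (k * n)).
    apply Rabs_le_between in H. apply Rabs_le_between in IH. apply Rabs_le. lra.
Qed.

Lemma div_bound X Y k n : 0 < k -> 0 < n -> Rabs (X - k * Y) <= k ->
  Rabs (X / (k * n) - Y / n) <= 1 / n.
Proof.
  intros Hk Hn H. set (z := X - k * Y).
  replace (X / (k * n) - Y / n) with (z / (k * n)) by (unfold z; field; lra).
  unfold Rdiv. rewrite Rabs_mult, Rabs_inv, (Rabs_pos_eq (k * n)) by nra.
  apply Rabs_le_between in H. fold z in H.
  replace (1 * / n) with (k * / (k * n)) by (field; lra).
  apply Rmult_le_compat_r. left; apply Rinv_0_lt_compat; nra.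
  apply Rabs_le; lra.
Qed.

Let u n := (iterR n F 0 - 0) / INR n.

Lemma u_cauchy m n : (1 <= m)%nat -> (1 <= n)%nat ->
  Rabs (u m - u n) <= 1 / INR m + 1 / INR n.
Proof.
  intros Hm Hn. unfold u. rewrite !Rminus_0_r.
  assert (0 < INR m) by (apply lt_0_INR; lia).
  assert (0 < INR n) by (apply lt_0_INR; lia).
  pose proof (div_bound (a (n * m)) (a m) (INR n) (INR m) H0 H (a_mult n m)) as B1.
  pose proof (div_bound (a (m * n)) (a n) (INR m) (INR n) H H0 (a_mult m n)) as B2.
  rewrite Nat.mul_comm in B1.
  replace (INR n * INR m) with (INR m * INR n) in B1 by ring.
  apply Rabs_le_between in B1. apply Rabs_le_between in B2. apply Rabs_le.
  unfold a in *. lra.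
Qed.

Lemma small_inv eps : 0 < eps -> exists N : nat, (1 <= N)%nat /\ forall n, (N <= n)%nat -> 1 / INR n < eps.
Proof.
  intros He. destruct (archimed_cor1 eps He) as [N [H1 H2]]. exists N. split. lia.
  intros n Hn. assert (0 < INR N) by (apply lt_0_INR; lia).
  assert (INR N <= INR n) by (apply le_INR; auto).
  unfold Rdiv. rewrite Rmult_1_l. eapply Rle_lt_trans; [|apply H1].
  apply Rinv_le_contravar; lra.
Qed.

Lemma rot_lim : is_lim_seq u (rot F).
Proof.
  assert (Hc : ex_lim_seq_cauchy u).
  { intros [eps He]; simpl.
    destruct (small_inv (eps / 2)) as [N [HN1 HN2]]. lra.
    exists N. intros n m Hn Hm. eapply Rle_lt_trans. apply u_cauchy; lia.
    pose proof (HN2 n Hn). pose proof (HN2 m Hm). lra. }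
  apply ex_lim_seq_cauchy_corr in Hc. destruct Hc as [l Hl].
  unfold rot. fold u. rewrite (is_lim_seq_unique _ _ Hl). simpl. auto.
Qed.

Lemma rot_bound n : Rabs (iterR n F 0 - INR n * rot F) <= 1.
Proof.
  destruct n as [|n]. { simpl. rewrite Rmult_0_l, Rminus_0_r, Rabs_R0. lra. }
  set (m := S n). assert (Hm : (1 <= m)%nat) by (unfold m; lia).
  assert (0 < INR m) by (apply lt_0_INR; lia).
  cut (Rabs (u m - rot F) <= 1 / INR m).
  { intro H1. unfold u in H1. rewrite Rminus_0_r in H1.
    replace (iterR m F 0 - INR m * rot F) with (INR m * (iterR m F 0 / INR m - rot F)) by (field; lra).
    rewrite Rabs_mult, Rabs_pos_eq by lra.
    replace 1 with (INR m * (1 / INR m)) by (field; lra).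
    apply Rmult_le_compat_l; lra. }
  apply Rnot_lt_le. intro Hlt.
  set (g := Rabs (u m - rot F) - 1 / INR m).
  assert (Hg : 0 < g) by (unfold g; lra).
  pose proof rot_lim as L. apply is_lim_seq_Reals in L.
  destruct (L (g / 2)) as [N1 HN1]. lra.
  destruct (small_inv (g / 2)) as [N2 [HN2a HN2b]]. lra.
  set (k := Nat.max N1 N2).
  assert (h1 := HN1 k ltac:(unfold k; lia)). unfold R_dist in h1.
  assert (h2 := HN2b k ltac:(unfold k; lia)).
  assert (h3 := u_cauchy m k Hm ltac:(unfold k; lia)).
  assert (Rabs (u m - rot F) <= Rabs (u m - u k) + Rabs (u k - rot F)).
  { replace (u m - rot F) with ((u m - u k) + (u k - rot F)) by ring. apply Rabs_triang. }
  unfold g in *. lra.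
Qed.

Lemma rot_bound2 n x : Rabs (iterR n F x - x - INR n * rot F) <= 2.
Proof.
  pose proof (rot_bound n). pose proof (osc _ (it_lift F HF n) 0 x).
  apply Rabs_le_between in H. apply Rabs_le_between in H0. apply Rabs_le. lra.
Qed.

End Rot.

Lemma arch_helper D B : (forall k : nat, INR k * D <= B) -> D <= 0.
Proof.
  intro H. apply Rnot_lt_le. intro HD.
  destruct (archimed_cor1 (D / (Rabs B + 1))) as [N [H1 H2]].
  { apply Rdiv_lt_0_compat; [lra| pose proof (Rabs_pos B); lra]. }
  assert (0 < INR N) by (apply lt_0_INR; lia).
  pose proof (H N). pose proof (Rle_abs B).
  assert (Rabs B + 1 < INR N * D).
  { apply (Rmult_lt_compat_l (INR N)) in H1; auto.
    rewrite Rinv_r in H1 by lra.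
    assert (0 < Rabs B + 1) by (pose proof (Rabs_pos B); lra).
    apply (Rmult_lt_compat_r (Rabs B + 1)) in H1; auto.
    replace (INR N * (D / (Rabs B + 1)) * (Rabs B + 1)) with (INR N * D) in H1 by (field; lra).
    lra. }
  lra.
Qed.

Lemma cont_eps f : continuity f -> forall x eps, 0 < eps ->
  exists d, 0 < d /\ forall y, Rabs (y - x) < d -> Rabs (f y - f x) < eps.
Proof.
  intros Hf x eps He. destruct (Hf x eps He) as [d [Hd H]].
  exists d; split; auto. intros y Hy.
  destruct (Req_dec y x) as [->|Hne]. rewrite Rminus_diag, Rabs_R0; auto.
  apply H. split. split. exact I. auto. simpl. unfold R_dist. auto.
Qed.

Lemma minper h : continuity h -> (forall x, h (x + 1) = h x) -> (forall x, 0 < h x) ->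
  exists d, 0 < d /\ forall x, d <= h x.
Proof.
  intros Hc Hp Hpos.
  destruct (continuity_ab_min h 0 1) as [m [Hm _]]. lra. intros; apply Hc.
  exists (h m). split; auto. intro x.
  destruct (fl_spec x) as [a b].
  assert (E : h x = h (x - IZR (fl x))).
  { rewrite <- (Rplus_0_r (h (x - IZR (fl x)))).
    replace 0 with (IZR (fl x) * 0) by ring.
    rewrite <- (per_Z h 0 ltac:(intro; rewrite Hp; ring)). f_equal; ring. }
  rewrite E. apply Hm. lra.
Qed.

Section Rot2.
Variable F : R -> R.
Hypothesis HF : circle_homeo_lift F.

Lemma lb n c : (1 <= n)%nat -> (forall x, c <= iterR n F x - x) -> c <= INR n * rot F.
Proof.
  intros Hn H.
  assert (K : forall k, INR k * c <= iterR (k * n) F 0).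
  { induction k as [|k IH]. simpl. lra.
    replace (S k * n)%nat with (n + k * n)%nat by lia. rewrite it_add, S_INR.
    pose proof (H (iterR (k * n) F 0)). lra. }
  assert (forall k, INR k * (c - INR n * rot F) <= 1).
  { intro k. pose proof (K k). pose proof (rot_bound F HF (k * n)).
    apply Rabs_le_between in H1. rewrite mult_INR in H1. nra. }
  apply arch_helper in H0. lra.
Qed.

Lemma ub n c : (forall x, iterR n F x - x <= c) -> INR n * rot F <= c.
Proof.
  intros H.
  assert (K : forall k, iterR (k * n) F 0 <= INR k * c).
  { induction k as [|k IH]. simpl. lra.
    replace (S k * n)%nat with (n + k * n)%nat by lia. rewrite it_add, S_INR.
    pose proof (H (iterR (k * n) F 0)). lra. }
  assert (forall k, INR k * (INR n * rot F - c) <= 1).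
  { intro k. pose proof (K k). pose proof (rot_bound F HF (k * n)).
    apply Rabs_le_between in H1. rewrite mult_INR in H1. nra. }
  apply arch_helper in H0. lra.
Qed.

Lemma hcont n c : continuity (fun x => iterR n F x - x - c).
Proof.
  destruct (it_lift F HF n) as [Hc _].
  intro x. apply continuity_pt_minus. apply continuity_pt_minus; auto.
  apply continuity_pt_id. apply continuity_pt_const. intros a b; auto.
Qed.

Lemma hper n c x : iterR n F (x + 1) - (x + 1) - c = iterR n F x - x - c.
Proof. destruct (it_lift F HF n) as [_ [_ Hp]]. rewrite Hp. ring. Qed.

Lemma lbs n c : (1 <= n)%nat -> (forall x, c < iterR n F x - x) -> c < INR n * rot F.
Proof.
  intros Hn H.
  destruct (minper (fun x => iterR n F x - x - c)) as [d [Hd Hd2]].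
  apply hcont. intro; apply hper. intro x; pose proof (H x); lra.
  assert (c + d <= INR n * rot F). apply lb; auto. intro x; pose proof (Hd2 x); simpl in *; lra.
  lra.
Qed.

Lemma ubs n c : (1 <= n)%nat -> (forall x, iterR n F x - x < c) -> INR n * rot F < c.
Proof.
  intros Hn H.
  destruct (minper (fun x => - (iterR n F x - x - c))) as [d [Hd Hd2]].
  intro x. apply continuity_pt_opp, hcont. intro; rewrite hper; auto.
  intro x; pose proof (H x); lra.
  assert (INR n * rot F <= c - d). apply ub; auto. intro x; pose proof (Hd2 x); simpl in *; lra.
  lra.
Qed.

Lemma sc n c : (exists a, c <= iterR n F a - a) -> (exists b, iterR n F b - b <= c) ->
  exists x, iterR n F x = x + c.
Proof.
  intros [a Ha] [b Hb].
  set (h := fun x => iterR n F x - x - c).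
  set (b' := b + IZR (fl (a - b)) + 1).
  destruct (fl_spec (a - b)) as [f1 f2].
  assert (Hb' : h b' = h b).
  { unfold h, b'. rewrite Rplus_assoc, <- plus_IZR.
    destruct (it_lift F HF n) as [_ [_ Hp]].
    rewrite (lift_Z _ (it_lift F HF n)). rewrite plus_IZR. ring. }
  destruct (IVT_cor h a b') as [z [Hz1 Hz2]].
  apply hcont. unfold b'; lra.
  rewrite Hb'. unfold h. assert (0 <= iterR n F a - a - c) by lra. assert (iterR n F b - b - c <= 0) by lra. nra.
  exists z. unfold h in Hz2. lra.
Qed.
End Rot2.

Lemma it_Z F : circle_homeo_lift F -> forall n k x, iterR n F (x + IZR k) = iterR n F x + IZR k.
Proof. intros HF n k x. apply lift_Z, it_lift; auto. Qed.

Lemma per_rot F : circle_homeo_lift F -> forall n y N, (1 <= n)%nat ->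
  iterR n F y = y + IZR N -> INR n * rot F = IZR N.
Proof.
  intros HF n y N Hn H.
  assert (K : forall k, iterR (k * n) F y = y + IZR (Z.of_nat k * N)).
  { induction k as [|k IH]. simpl. ring.
    replace (S k * n)%nat with (n + k * n)%nat by lia. rewrite it_add, IH, it_Z, H; auto.
    replace (Z.of_nat (S k) * N)%Z with (N + Z.of_nat k * N)%Z by lia. rewrite plus_IZR. ring. }
  assert (B : forall k, Rabs (INR k * (IZR N - INR n * rot F)) <= 2).
  { intro k. pose proof (rot_bound2 F HF (k * n) y). rewrite K, mult_INR in H0.
    rewrite mult_IZR, <- INR_IZR_INZ in H0.
    replace (INR k * (IZR N - INR n * rot F)) with (y + INR k * IZR N - y - INR k * INR n * rot F) by ring. auto. }
  assert (IZR N - INR n * rot F <= 0).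
  { apply (arch_helper _ 2). intro k. pose proof (B k). apply Rabs_le_between in H0. lra. }
  assert (-(IZR N - INR n * rot F) <= 0).
  { apply (arch_helper _ 2). intro k. pose proof (B k). apply Rabs_le_between in H1. lra. }
  lra.
Qed.

Lemma exists_above F : circle_homeo_lift F -> forall n c, (1 <= n)%nat -> c <= INR n * rot F ->
  exists a, c <= iterR n F a - a.
Proof.
  intros HF n c Hn Hc. apply NNPP. intro H.
  assert (forall x, iterR n F x - x < c).
  { intro x. apply Rnot_le_lt. intro h. apply H. exists x; auto. }
  pose proof (ubs F HF n c Hn H0). lra.
Qed.

Lemma exists_below F : circle_homeo_lift F -> forall n c, (1 <= n)%nat -> INR n * rot F <= c ->
  exists a, iterR n F a - a <= c.
Proof.
  intros HF n c Hn Hc. apply NNPP. intro H.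
  assert (forall x, c < iterR n F x - x).
  { intro x. apply Rnot_le_lt. intro h. apply H. exists x; auto. }
  pose proof (lbs F HF n c Hn H0). lra.
Qed.

Lemma exists_periodic F : circle_homeo_lift F -> forall n c, (1 <= n)%nat -> INR n * rot F = c ->
  exists y, iterR n F y = y + c.
Proof.
  intros HF n c Hn Hc. apply sc; auto.
  apply exists_above; auto; lra. apply exists_below; auto; lra.
Qed.

Lemma it_le F G : circle_homeo_lift F -> (forall x, F x <= G x) -> forall n x, iterR n F x <= iterR n G x.
Proof.
  intros HF H n. induction n as [|n IH]; intro x; simpl. lra.
  eapply Rle_trans. apply (lift_le F HF). apply IH. apply H.
Qed.

Lemma rot_mono F G : circle_homeo_lift F -> circle_homeo_lift G -> (forall x, F x <= G x) -> rot F <= rot G.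
Proof.
  intros HF HG H. cut (rot F - rot G <= 0). lra.
  apply (arch_helper _ 2). intro k.
  pose proof (rot_bound F HF k). pose proof (rot_bound G HG k). pose proof (it_le F G HF H k 0).
  apply Rabs_le_between in H0. apply Rabs_le_between in H1. lra.
Qed.

Lemma it_gap F G d : circle_homeo_lift F -> 0 <= d -> (forall x, F x + d <= G x) ->
  forall n x, iterR (S n) F x + d <= iterR (S n) G x.
Proof.
  intros HF Hd H n. induction n as [|n IH]; intro x. simpl. apply H.
  change (iterR (S (S n)) F x) with (F (iterR (S n) F x)).
  change (iterR (S (S n)) G x) with (G (iterR (S n) G x)).
  pose proof (IH x). pose proof (H (iterR (S n) G x)).
  assert (F (iterR (S n) F x) <= F (iterR (S n) G x)) by (apply (lift_le F HF); lra). lra.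
Qed.

Lemma it_strict F G : circle_homeo_lift G -> (forall x, F x < G x) ->
  forall n x, iterR (S n) F x < iterR (S n) G x.
Proof.
  intros [_ [HG _]] H n. induction n as [|n IH]; intro x. simpl. apply H.
  change (iterR (S (S n)) F x) with (F (iterR (S n) F x)).
  change (iterR (S (S n)) G x) with (G (iterR (S n) G x)).
  eapply Rlt_trans. apply H. apply HG, IH.
Qed.

Lemma IC F : continuity F -> forall n y eps, 0 < eps -> exists eta, 0 < eta /\
  forall G, (forall x, Rabs (G x - F x) < eta) -> Rabs (iterR n G y - iterR n F y) < eps.
Proof.
  intros HF n y. induction n as [|n IH]; intros eps He.
  - exists 1. split. lra. intros. simpl. rewrite Rminus_diag, Rabs_R0; auto.
  - destruct (cont_eps F HF (iterR n F y) (eps / 2)) as [d [Hd Hd2]]. lra.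
    destruct (IH (Rmin d (eps/2))) as [e1 [He1 He2]]. apply Rmin_pos; lra.
    exists (Rmin e1 (eps / 2)). split. apply Rmin_pos; lra.
    intros G HG. simpl.
    assert (A := He2 G ltac:(intro x; eapply Rlt_le_trans; [apply HG| apply Rmin_l])).
    assert (B := HG (iterR n G y)). assert (Rmin e1 (eps/2) <= eps / 2) by apply Rmin_r.
    assert (C := Hd2 (iterR n G y) ltac:(eapply Rlt_le_trans; [apply A| apply Rmin_l])).
    replace (G (iterR n G y) - F (iterR n F y)) with
      ((G (iterR n G y) - F (iterR n G y)) + (F (iterR n G y) - F (iterR n F y))) by ring.
    eapply Rle_lt_trans. apply Rabs_triang. lra.
Qed.

Lemma rot_cont F : circle_homeo_lift F -> forall eps, 0 < eps -> exists eta, 0 < eta /\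
  forall G, circle_homeo_lift G -> (forall x, Rabs (G x - F x) < eta) -> Rabs (rot G - rot F) < eps.
Proof.
  intros HF eps He.
  destruct (small_inv (eps / 3)) as [N [HN1 HN2]]. lra.
  assert (HN := HN2 N (le_n N)).
  assert (P : 0 < INR N) by (apply lt_0_INR; lia).
  destruct (IC F (proj1 HF) N 0 1) as [eta [Heta H]]. lra.
  exists eta; split; auto. intros G HG HGF.
  pose proof (H G HGF). pose proof (rot_bound F HF N). pose proof (rot_bound G HG N).
  apply Rabs_le_between in H1. apply Rabs_le_between in H2. apply Rabs_def2 in H0.
  assert (Rabs (INR N * (rot G - rot F)) < 3).
  { apply Rabs_def1; lra. }
  rewrite Rabs_mult, (Rabs_pos_eq (INR N)) in H3 by lra.
  assert (Rabs (rot G - rot F) < 3 / INR N).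
  { apply (Rmult_lt_reg_l (INR N)); auto. replace (INR N * (3 / INR N)) with 3 by (field; lra). auto. }
  assert (3 / INR N = 3 * (1 / INR N)) by (field; lra). lra.
Qed.

Definition rs (G : R -> R) (x s : R) : Prop :=
  exists d, 0 < d /\ forall y, x <= y < x + d -> G y - G x = s * (y - x).

Lemma rs_unique G x s1 s2 : rs G x s1 -> rs G x s2 -> s1 = s2.
Proof.
  intros [d1 [H1 E1]] [d2 [H2 E2]].
  set (y := x + Rmin d1 d2 / 2).
  assert (0 < Rmin d1 d2) by (apply Rmin_pos; auto).
  pose proof (Rmin_l d1 d2). pose proof (Rmin_r d1 d2).
  assert (A := E1 y ltac:(unfold y; lra)). assert (B := E2 y ltac:(unfold y; lra)).
  assert (0 < y - x) by (unfold y; lra).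
  apply (Rmult_eq_reg_r (y - x)); lra.
Qed.

Lemma rs_comp G H x s t : rs G x s -> rs H (G x) t -> 0 < s -> rs (fun z => H (G z)) x (t * s).
Proof.
  intros [d1 [H1 E1]] [d2 [H2 E2]] Hs.
  exists (Rmin d1 (d2 / s)). split. apply Rmin_pos; auto. apply Rdiv_lt_0_compat; auto.
  intros y Hy. pose proof (Rmin_l d1 (d2 / s)). pose proof (Rmin_r d1 (d2 / s)).
  assert (A := E1 y ltac:(lra)).
  assert (Hy2 : G x <= G y < G x + d2).
  { split. nra. assert (s * (y - x) < d2).
    { assert (h3 : y - x < d2 / s) by lra. apply (Rmult_lt_compat_l s) in h3; auto.
      replace (s * (d2 / s)) with d2 in h3 by (field; lra). auto. }
    lra. }
  rewrite (E2 (G y) Hy2). rewrite A. ring.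
Qed.

Lemma fl_unique x N : IZR N <= x < IZR N + 1 -> fl x = N.
Proof.
  intros H. destruct (fl_spec x).
  assert (IZR (fl x) - IZR N < 1) by lra. assert (-1 < IZR (fl x) - IZR N) by lra.
  rewrite <- minus_IZR in H2, H3. apply lt_IZR in H2. apply lt_IZR in H3. lia.
Qed.

Lemma pow_gt1 L m : 1 < L -> (0 < m)%Z -> 1 < powerRZ L m.
Proof.
  intros HL Hm. destruct m as [|p|p]; try lia. simpl. apply Rlt_pow_R1; auto. lia.
Qed.

Lemma pow_lt1 L m : 1 < L -> (m < 0)%Z -> powerRZ L m < 1.
Proof.
  intros HL Hm. destruct m as [|p|p]; try lia. simpl.
  assert (1 < L ^ Pos.to_nat p) by (apply Rlt_pow_R1; auto; lia).
  rewrite <- Rinv_1. apply Rinv_lt_contravar; lra.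
Qed.

Lemma pow_ge1 L m : 1 < L -> (0 <= m)%Z -> 1 <= powerRZ L m.
Proof.
  intros HL Hm. destruct (Z.eq_dec m 0) as [->|h]. simpl; lra.
  left; apply pow_gt1; auto; lia.
Qed.

Lemma pow_le1 L m : 1 < L -> (m <= 0)%Z -> powerRZ L m <= 1.
Proof.
  intros HL Hm. destruct (Z.eq_dec m 0) as [->|h]. simpl; lra.
  left; apply pow_lt1; auto; lia.
Qed.

Lemma lift_inj G : circle_homeo_lift G -> forall a b, G a = G b -> a = b.
Proof.
  intros [_ [Hm _]] a b H. destruct (Rtotal_order a b) as [h|[h|h]]; auto.
  apply Hm in h; lra. apply Hm in h; lra.
Qed.

Lemma IVTv f a b v : continuity f -> a <= b -> f a <= v <= f b -> exists c, a <= c <= b /\ f c = v.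
Proof.
  intros Hf Hab Hv.
  destruct (IVT_cor (fun x => f x - v) a b) as [c [Hc1 Hc2]].
  intro x. apply continuity_pt_minus; auto. apply continuity_pt_const. intros ? ?; auto.
  auto. assert (f a - v <= 0) by lra. assert (0 <= f b - v) by lra. nra.
  exists c. split; auto. lra.
Qed.

Lemma rsmono k a b : continuity k -> a <= b ->
  (forall z, a <= z < b -> exists d, 0 < d /\ forall w, z <= w < z + d -> k z <= k w) ->
  k a <= k b.
Proof.
  intros Hk Hab Hloc.
  set (E := fun t => a <= t <= b /\ forall s, a <= s <= t -> k a <= k s).
  assert (Eb : bound E). { exists b. intros t [Ht _]. lra. }
  assert (Ea : E a). { split. lra. intros s Hs. replace s with a by lra. lra. }
  destruct (completeness E Eb (ex_intro _ a Ea)) as [c [Hub Hlub]].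
  assert (Hac : a <= c) by (apply Hub; auto).
  assert (Hcb : c <= b) by (apply Hlub; intros t [Ht _]; lra).
  assert (C1 : forall s, a <= s < c -> k a <= k s).
  { intros s Hs. apply NNPP. intro Hn.
    assert (c <= s). { apply Hlub. intros t [Ht1 Ht2]. apply Rnot_lt_le. intro Hts.
      apply Hn. apply Ht2. lra. }
    lra. }
  assert (C2 : k a <= k c).
  { destruct (Req_dec c a) as [->|Hne]. lra.
    apply Rnot_lt_le. intro Hlt.
    destruct (cont_eps k Hk c (k a - k c)) as [d [Hd Hd2]]. lra.
    set (s := Rmax a (c - d / 2)).
    assert (a <= s < c). { unfold s. split. apply Rmax_l. apply Rmax_lub_lt; lra. }
    assert (Rabs (s - c) < d). { assert (c - d/2 <= s) by apply Rmax_r. apply Rabs_def1; lra. }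
    pose proof (Hd2 s H0). apply Rabs_def2 in H1. pose proof (C1 s H). lra. }
  assert (Ec : E c). { split. lra. intros s Hs. destruct (Req_dec s c) as [->|hne]. auto. apply C1; lra. }
  destruct (Req_dec c b) as [->|Hne].
  - apply (proj2 Ec). lra.
  - exfalso. destruct (Hloc c ltac:(lra)) as [d [Hd Hd2]].
    set (t := Rmin (c + d / 2) b).
    assert (c < t). { unfold t. apply Rmin_glb_lt; lra. }
    assert (E t).
    { split. split. lra. apply Rmin_r. intros s Hs. destruct (Rle_lt_dec s c).
      apply (proj2 Ec). lra.
      assert (t <= c + d/2) by (unfold t; apply Rmin_l). assert (k c <= k s) by (apply Hd2; lra). lra. }
    apply Hub in H0. lra.
Qed.

Definition PLs (F : R -> R) (L a0 a1 : R) : Prop :=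
  circle_homeo_lift F /\ 1 < L /\ a0 < a1 /\ a1 < a0 + 1 /\
  (forall x y, a0 <= x <= a1 -> a0 <= y <= a1 -> F y - F x = L * (y - x)) /\
  (forall x y, a1 <= x <= a0 + 1 -> a1 <= y <= a0 + 1 -> F y - F x = (y - x) / L).

Section PL.
Variables (F : R -> R) (L a0 a1 : R).
Hypothesis HP : PLs F L a0 a1.

Let HF : circle_homeo_lift F := proj1 HP.
Let HL : 1 < L := proj1 (proj2 HP).

Definition ee (z : R) : Z :=
  if Rlt_dec (z - IZR (fl (z - a0))) a1 then 1%Z else (-1)%Z.

Lemma ee_pm z : ee z = 1%Z \/ ee z = (-1)%Z.
Proof. unfold ee. destruct Rlt_dec; auto. Qed.

Lemma ee_one z : ee z = 1%Z <-> exists N, a0 + IZR N <= z < a1 + IZR N.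
Proof.
  pose proof HP as HP0; destruct HP0 as [_ [_ [H1 [H2 _]]]].
  unfold ee. split.
  - destruct Rlt_dec as [h|h]; intro E; [|discriminate].
    exists (fl (z - a0)). destruct (fl_spec (z - a0)). lra.
  - intros [N HN]. rewrite (fl_unique (z - a0) N) by lra.
    destruct Rlt_dec as [h|h]; auto. lra.
Qed.

Lemma rs_F x : rs F x (powerRZ L (ee x)).
Proof.
  pose proof HP as HP0; destruct HP0 as [HF' [_ [H1 [H2 [HA HB]]]]].
  set (k := fl (x - a0)). destruct (fl_spec (x - a0)) as [f1 f2]. fold k in f1, f2.
  set (y := x - IZR k).
  assert (Esh : forall z, F z = F (z - IZR k) + IZR k).
  { intro z. rewrite <- (lift_Z F HF'). f_equal; ring. }
  unfold ee. fold k. fold y. destruct Rlt_dec as [h|h].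
  - exists (a1 - y). split. lra. intros z Hz. simpl. rewrite (Esh z), (Esh x).
    fold y. replace (F (z - IZR k) + IZR k - (F y + IZR k)) with (F (z - IZR k) - F y) by ring.
    rewrite HA; unfold y in *; try lra.
  - exists (a0 + 1 - y). split. unfold y; lra. intros z Hz. simpl. rewrite (Esh z), (Esh x).
    fold y. replace (F (z - IZR k) + IZR k - (F y + IZR k)) with (F (z - IZR k) - F y) by ring.
    rewrite HB; unfold y in *; try lra. field. lra.
Qed.

Fixpoint Se (n : nat) (x : R) : Z :=
  match n with
  | O => 0%Z
  | S m => (Se m x + ee (iterR m F x))%Z
  end.

Lemma rs_it n x : rs (iterR n F) x (powerRZ L (Se n x)).
Proof.
  induction n as [|n IH].
  - exists 1. split. lra. intros. simpl. ring.
  - simpl. rewrite powerRZ_add by lra. rewrite Rmult_comm.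
    apply (rs_comp (iterR n F) F x). auto. apply rs_F. apply powerRZ_lt; lra.
Qed.

Lemma Se_parity n x : Z.even (Se n x) = Nat.even n.
Proof.
  induction n as [|n IH]. auto.
  simpl Se. rewrite Z.even_add, IH, Nat.even_succ, <- Nat.negb_even.
  destruct (ee_pm (iterR n F x)) as [E|E]; rewrite E; simpl; destruct (Nat.even n); auto.
Qed.

Lemma odd_not_id q c : (forall x, iterR q F x = x + c) -> Nat.even q = true.
Proof.
  intro H. assert (R1 : rs (iterR q F) 0 1).
  { exists 1. split. lra. intros y _. rewrite !H. ring. }
  pose proof (rs_unique _ _ _ _ (rs_it q 0) R1) as E.
  rewrite <- (Se_parity q 0).
  destruct (Z.lt_trichotomy (Se q 0) 0) as [h|[h|h]].
  - pose proof (pow_lt1 L _ HL h). lra.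
  - rewrite h; auto.
  - pose proof (pow_gt1 L _ HL h). lra.
Qed.

Lemma ee_cross z0 z : z0 < z -> ee z0 = 1%Z -> ee z = (-1)%Z -> exists N, z0 < a1 + IZR N <= z.
Proof.
  intros Hz E0 E1. apply ee_one in E0. destruct E0 as [N HN]. exists N.
  split. lra. apply Rnot_lt_le. intro h.
  assert (ee z = 1%Z) by (apply ee_one; exists N; lra). rewrite H in E1; discriminate.
Qed.

Section Core.
Variables (q : nat) (p : Z) (y0 y1 : R).
Hypothesis Hq : Nat.even q = true.
Hypothesis Hq1 : (1 <= q)%nat.
Hypothesis MP : forall i y N, (0 < i < q)%nat -> iterR i F y = y + IZR N -> False.
Hypothesis Hy : y0 < y1.
Hypothesis Hy0 : iterR q F y0 = y0 + IZR p.
Hypothesis Hy1 : iterR q F y1 = y1 + IZR p.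
Hypothesis Hpos : forall y, y0 < y < y1 -> y + IZR p < iterR q F y.

Let HFi n := it_lift F HF n.

Definition cross y k := exists N, iterR k F y0 < a1 + IZR N <= iterR k F y.

Lemma cross_pt y k : y0 < y < y1 -> cross y k -> exists c N, y0 < c <= y /\ iterR k F c = a1 + IZR N.
Proof.
  intros Hyy [N [h1 h2]].
  destruct (IVTv (iterR k F) y0 y (a1 + IZR N)) as [c [Hc1 Hc2]].
  apply (HFi k). lra. lra.
  exists c, N. split; auto. split; try lra. destruct (Req_dec c y0) as [->|hh]. lra. lra.
Qed.

Lemma uniq_cross y k j : y0 < y < y1 -> (k < j)%nat -> (j < q)%nat -> cross y k -> cross y j -> False.
Proof.
  intros Hyy Hkj Hjq Ck Cj.
  destruct (cross_pt y k Hyy Ck) as [c [N [Hc Ec]]].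
  destruct (cross_pt y j Hyy Cj) as [c' [N' [Hc' Ec']]].
  set (i := (j - k)%nat). set (M := (N' - N)%Z).
  assert (Ei : iterR i F c' = c + IZR M).
  { apply (lift_inj _ (HFi k)).
    rewrite <- it_add. replace (k + i)%nat with j by (unfold i; lia). rewrite Ec'.
    rewrite it_Z, Ec by auto. unfold M. rewrite minus_IZR. ring. }
  assert (Hi : (0 < i < q)%nat) by (unfold i; lia).
  destruct (Rtotal_order (iterR i F y0) (y0 + IZR M)) as [h|[h|h]].
  - destruct (IVTv (iterR i F) y0 c' (y0 + IZR M)) as [z [Hz Ez]].
    apply (HFi i). lra. split. lra. rewrite Ei. lra.
    assert (z <> y0) by (intro; subst; lra).
    assert (Hz' : y0 < z < y1) by lra.
    assert (iterR q F z = z + IZR p).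
    { apply (lift_inj _ (HFi i)). rewrite it_comm, Ez, it_Z, Hy0 by auto.
      rewrite it_Z, Ez by auto. ring. }
    pose proof (Hpos z Hz'). lra.
  - eapply MP; eauto.
  - set (v := iterR i F y0 - IZR M).
    assert (iterR i F y0 < iterR i F c') by (apply (proj1 (proj2 (HFi i))); lra).
    assert (Hv : y0 < v < y1) by (unfold v; lra).
    assert (iterR q F v = v + IZR p).
    { unfold v. replace (iterR i F y0 - IZR M) with (iterR i F y0 + IZR (- M)) by (rewrite opp_IZR; ring).
      rewrite it_Z by auto. rewrite it_comm, Hy0, it_Z by auto. rewrite opp_IZR. ring. }
    pose proof (Hpos v Hv). lra.
Qed.

Lemma key y : y0 <= y < y1 -> (Se q y0 - 2 <= Se q y)%Z.
Proof.
  intros Hyy. destruct (Req_dec y y0) as [->|Hne]. lia.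
  assert (Hyy' : y0 < y < y1) by lra.
  assert (P : forall n, (n <= q)%nat ->
    (0 <= Se n y - Se n y0)%Z \/ ((-2 <= Se n y - Se n y0)%Z /\ exists k, (k < n)%nat /\ cross y k)).
  { induction n as [|n IH]; intro Hn. left; simpl; lia.
    simpl Se. specialize (IH ltac:(lia)).
    assert (Hmono : iterR n F y0 < iterR n F y) by (apply (proj1 (proj2 (HFi n))); lra).
    destruct (ee_pm (iterR n F y0)) as [E0|E0]; destruct (ee_pm (iterR n F y)) as [E1|E1];
      rewrite E0, E1;
      [ | | destruct IH as [h|[h [k [hk hc]]]]; [left; lia| right; split; [lia| exists k; split; [lia|auto]]]
        | destruct IH as [h|[h [k [hk hc]]]]; [left; lia| right; split; [lia| exists k; split; [lia|auto]]] ].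
    { destruct IH as [h|[h [k [hk hc]]]]; [left; lia| right; split; [lia| exists k; split; [lia|auto]]]. }
    assert (Cn : cross y n) by (apply ee_cross; auto).
    destruct IH as [h|[h [k [hk hc]]]].
    { right. split. lia. exists n. split; auto. }
    exfalso. apply (uniq_cross y k n); auto; lia. }
  destruct (P q (le_n q)) as [h|[h _]]; lia.
Qed.

Lemma core : False.
Proof.
  set (M0 := Se q y0).
  assert (HM0 : (1 <= M0)%Z).
  { destruct (Z_lt_le_dec 0 M0) as [h|h]. lia. exfalso.
    destruct (rs_it q y0) as [d [Hd E]]. fold M0 in E.
    set (y := y0 + Rmin d (y1 - y0) / 2).
    assert (0 < Rmin d (y1 - y0)) by (apply Rmin_pos; lra).
    pose proof (Rmin_l d (y1 - y0)). pose proof (Rmin_r d (y1 - y0)).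
    assert (A := E y ltac:(unfold y; lra)).
    pose proof (pow_le1 L M0 HL h). pose proof (Hpos y ltac:(unfold y; lra)).
    assert (0 < y - y0) by (unfold y; lra).
    assert (powerRZ L M0 * (y - y0) <= y - y0) by nra. lra. }
  assert (HM2 : (2 <= M0)%Z).
  { pose proof (Se_parity q y0). fold M0 in H. rewrite Hq in H.
    apply Z.even_spec in H. destruct H as [b Hb]. lia. }
  set (m := (y0 + y1) / 2).
  assert (Hk : (fun x => iterR q F x - x) m <= (fun x => iterR q F x - x) y1).
  { apply (rsmono (fun x => iterR q F x - x) m y1). intro x. apply continuity_pt_minus. apply (HFi q). apply continuity_pt_id.
    unfold m; lra.
    intros z Hz. destruct (rs_it q z) as [d [Hd E]]. exists d. split; auto.
    intros w Hw. cbv beta.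
    assert (1 <= powerRZ L (Se q z)).
    { apply pow_ge1; auto. pose proof (key z ltac:(unfold m in Hz; lra)). fold M0 in H. lia. }
    assert (0 <= w - z) by lra.
    assert (w - z <= powerRZ L (Se q z) * (w - z)) by nra.
    assert (iterR q F w = iterR q F z + powerRZ L (Se q z) * (w - z)) by (rewrite <- (E w Hw); ring).
    lra. }
  simpl in Hk. rewrite Hy1 in Hk. pose proof (Hpos m ltac:(unfold m; lra)). lra.
Qed.

End Core.
End PL.

Lemma mirror_PL F L a0 a1 : PLs F L a0 a1 -> PLs (fun x => - F (- x)) L (- a1) (- a0).
Proof.
  intros [[Hc [Hm Hp]] [HL [H1 [H2 [HA HB]]]]].
  assert (HF : circle_homeo_lift F) by (repeat split; auto).
  repeat split.
  - intro x. apply continuity_pt_opp.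
    apply (continuity_pt_comp (fun x => - x) F). apply continuity_pt_opp, continuity_pt_id. apply Hc.
  - intros x y h. apply Ropp_lt_contravar. apply Hm. lra.
  - intro x. replace (- (x + 1)) with (- x + IZR (-1)) by (simpl; ring).
    rewrite (lift_Z F HF). simpl. ring.
  - lra.
  - lra.
  - lra.
  - intros x y hx hy. replace (- F (- y) - - F (- x)) with (F (- x) - F (- y)) by ring.
    rewrite HA by lra. ring.
  - intros x y hx hy. replace (- F (- y) - - F (- x)) with (F (- x + 1) - F (- y + 1)).
    rewrite HB by lra. field. lra.
    rewrite !(Hp). ring.
Qed.

Lemma it_mirror F n x : iterR n (fun x => - F (- x)) x = - iterR n F (- x).
Proof.
  induction n as [|n IH]; simpl. ring. rewrite IH, Ropp_involutive. auto.
Qed.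

Lemma core_neg F L a0 a1 (HP : PLs F L a0 a1) q p y0 y1 :
  Nat.even q = true -> (1 <= q)%nat ->
  (forall i y N, (0 < i < q)%nat -> iterR i F y = y + IZR N -> False) ->
  y0 < y1 -> iterR q F y0 = y0 + IZR p -> iterR q F y1 = y1 + IZR p ->
  (forall y, y0 < y < y1 -> iterR q F y < y + IZR p) -> False.
Proof.
  intros Hq Hq1 MP Hy Hy0 Hy1 Hneg.
  apply (core _ _ _ _ (mirror_PL F L a0 a1 HP) q (- p) (- y1) (- y0) Hq Hq1).
  - intros i y N Hi E. rewrite it_mirror in E. apply (MP i (- y) (- N)%Z Hi).
    rewrite opp_IZR. lra.
  - lra.
  - rewrite it_mirror, Ropp_involutive, Hy1, opp_IZR. ring.
  - rewrite it_mirror, Ropp_involutive, Hy0, opp_IZR. ring.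
  - intros y Hyy. rewrite it_mirror, opp_IZR. pose proof (Hneg (- y) ltac:(lra)). lra.
Qed.

Lemma left_gap k x0 : continuity k -> (forall x, k (x + 1) = k x) -> 0 < k x0 ->
  (exists z, k z <= 0) -> exists y0, y0 < x0 /\ k y0 = 0 /\ forall y, y0 < y <= x0 -> 0 < k y.
Proof.
  intros Hk Hp Hx0 [z Hz].
  assert (Hper : forall m x, k (x + IZR m) = k x).
  { intros m x. rewrite (per_Z k 0) by (intro; rewrite Hp; ring). ring. }
  set (E := fun y => y <= x0 /\ k y <= 0).
  assert (Eb : bound E) by (exists x0; intros y [h _]; auto).
  destruct (fl_spec (x0 - z)) as [f1 f2].
  assert (Ez : E (z + IZR (fl (x0 - z)))). { split. lra. rewrite Hper; auto. }
  destruct (completeness E Eb (ex_intro _ _ Ez)) as [c [Hub Hlub]].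
  assert (Hcx : c <= x0) by (apply Hlub; intros y [h _]; auto).
  assert (Habove : forall y, c < y <= x0 -> 0 < k y).
  { intros y Hy. apply Rnot_le_lt. intro h. assert (y <= c) by (apply Hub; split; lra). lra. }
  assert (Hle : k c <= 0).
  { apply Rnot_lt_le. intro h.
    destruct (cont_eps k Hk c (k c)) as [d [Hd Hd2]]; auto.
    assert (~ (forall y, E y -> y <= c - d / 2)).
    { intro H. assert (c <= c - d/2) by (apply Hlub; auto). lra. }
    apply not_all_ex_not in H. destruct H as [y Hy].
    apply imply_to_and in Hy. destruct Hy as [[Ey1 Ey2] Hy].
    assert (y <= c) by (apply Hub; split; auto).
    assert (Rabs (y - c) < d) by (apply Rabs_def1; lra).
    pose proof (Hd2 y H0). apply Rabs_def2 in H1. lra. }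
  assert (Hcx' : c < x0). { destruct (Req_dec c x0) as [->|h]. lra. lra. }
  assert (Hge : 0 <= k c).
  { apply Rnot_lt_le. intro h.
    destruct (cont_eps k Hk c (- k c)) as [d [Hd Hd2]]. lra.
    set (y := Rmin (c + d / 2) x0).
    assert (y <= c + d/2) by (unfold y; apply Rmin_l).
    assert (c < y) by (unfold y; apply Rmin_glb_lt; lra).
    assert (y <= x0) by (unfold y; apply Rmin_r).
    assert (Rabs (y - c) < d) by (apply Rabs_def1; lra).
    pose proof (Hd2 y H2). apply Rabs_def2 in H3. pose proof (Habove y ltac:(lra)). lra. }
  exists c. split; auto. split. lra. auto.
Qed.

Lemma gap_interval k x0 : continuity k -> (forall x, k (x + 1) = k x) -> 0 < k x0 ->
  (exists z, k z <= 0) -> exists y0 y1, y0 < y1 /\ k y0 = 0 /\ k y1 = 0 /\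
  forall y, y0 < y < y1 -> 0 < k y.
Proof.
  intros Hk Hp Hx0 Hz.
  destruct (left_gap k x0 Hk Hp Hx0 Hz) as [y0 [A1 [A2 A3]]].
  destruct (left_gap (fun t => k (- t)) (- x0)) as [t0 [B1 [B2 B3]]].
  - intro x. apply (continuity_pt_comp (fun x => - x) k). apply continuity_pt_opp, continuity_pt_id. apply Hk.
  - intro x. replace (- (x + 1)) with (- x + IZR (-1)) by (simpl; ring).
    rewrite (per_Z k 0) by (intro; rewrite Hp; ring). ring.
  - rewrite Ropp_involutive; auto.
  - destruct Hz as [z Hz]. exists (- z). rewrite Ropp_involutive; auto.
  - exists y0, (- t0). split. lra. split; auto. split; auto.
    intros y Hy. destruct (Rle_lt_dec y x0). apply A3; lra.
    replace y with (- - y) by ring. apply B3. lra.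
Qed.

Lemma even_id F L a0 a1 (HP : PLs F L a0 a1) q p :
  (1 <= q)%nat -> Nat.even q = true -> Z.gcd p (Z.of_nat q) = 1%Z ->
  INR q * rot F = IZR p -> forall x, iterR q F x = x + IZR p.
Proof.
  intros Hq1 Hq Hg Hr. pose proof (proj1 HP) as HF.
  apply NNPP. intro Hn. apply not_all_ex_not in Hn. destruct Hn as [x0 Hx0].
  assert (MP : forall i y N, (0 < i < q)%nat -> iterR i F y = y + IZR N -> False).
  { intros i y N Hi E. pose proof (per_rot F HF i y N ltac:(lia) E) as Ri.
    assert (IZR (N * Z.of_nat q) = IZR (Z.of_nat i * p)).
    { rewrite !mult_IZR, <- !INR_IZR_INZ. rewrite <- Ri, <- Hr. ring. }
    apply eq_IZR in H.
    assert (Z.divide (Z.of_nat q) (p * Z.of_nat i)) by (exists N; lia).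
    apply Z.gauss in H0. apply Z.divide_pos_le in H0; lia. rewrite Z.gcd_comm; auto. }
  destruct (exists_periodic F HF q (IZR p) Hq1 Hr) as [z Hz].
  set (k := fun x => iterR q F x - x - IZR p).
  assert (Hk : continuity k) by apply (hcont F HF).
  assert (Hkp : forall x, k (x + 1) = k x) by (intro; apply (hper F HF)).
  destruct (Rtotal_order (k x0) 0) as [h|[h|h]].
  - destruct (gap_interval (fun x => - k x) x0) as [y0 [y1 [B1 [B2 [B3 B4]]]]].
    intro x. apply continuity_pt_opp, Hk. intro x. rewrite Hkp; auto. lra.
    exists z. unfold k. rewrite Hz. lra.
    apply (core_neg F L a0 a1 HP q p y0 y1); auto.
    unfold k in B2; lra. unfold k in B3; lra.
    intros y Hy. pose proof (B4 y Hy). unfold k in H; lra.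
  - apply Hx0. unfold k in h. lra.
  - destruct (gap_interval k x0) as [y0 [y1 [B1 [B2 [B3 B4]]]]]; auto.
    exists z. unfold k. rewrite Hz. lra.
    apply (core F L a0 a1 HP q p y0 y1); auto.
    unfold k in B2; lra. unfold k in B3; lra.
    intros y Hy. pose proof (B4 y Hy). unfold k in H; lra.
Qed.

Lemma trap_PL F : trap_type F -> exists L a0 a1, PLs F L a0 a1.
Proof.
  intros [al [th [a0 [a1 [H1 [H2 [H3 [HF [H4 [H5 [HA [HB _]]]]]]]]]]]].
  exists (Lambda al th), a0, a1. repeat split; auto; try apply HF.
  unfold Lambda. pose proof PI_RGT_0.
  assert (s1 : 0 < sin (th - al)) by (apply sin_gt_0; lra).
  assert (c1 : 0 < cos th) by (apply cos_gt_0; lra).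
  assert (s2 : 0 < sin al) by (apply sin_gt_0; lra).
  assert (sin (th + al) - sin (th - al) = 2 * cos th * sin al) by (rewrite sin_plus, sin_minus; ring).
  assert (sin (th + al) / sin (th - al) - 1 = (sin (th + al) - sin (th - al)) / sin (th - al)) by (field; lra).
  assert (0 < (sin (th + al) - sin (th - al)) / sin (th - al)).
  { apply Rdiv_lt_0_compat; auto. rewrite H0. nra. }
  lra.
Qed.

Lemma Zeven_nat n : Z.even (Z.of_nat n) = Nat.even n.
Proof.
  induction n as [|n IH]. auto.
  rewrite Nat2Z.inj_succ, Z.even_succ, Nat.even_succ, <- Z.negb_even, <- Nat.negb_even, IH. auto.
Qed.

Lemma RED P Q : (0 < Q)%Z -> exists g p' q', (0 < g)%Z /\ (0 < q')%Z /\ P = (p' * g)%Z /\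
  Q = (q' * g)%Z /\ Z.gcd p' q' = 1%Z.
Proof.
  intros HQ. set (g := Z.gcd P Q).
  assert (Hg : (0 < g)%Z).
  { pose proof (Z.gcd_nonneg P Q). destruct (Z.eq_dec g 0) as [h|h].
    apply Z.gcd_eq_0 in h. lia. fold g in H. lia. }
  destruct (Z.gcd_divide_l P Q) as [k1 H1]. destruct (Z.gcd_divide_r P Q) as [k2 H2].
  fold g in H1, H2.
  exists g, k1, k2. split; auto. split. nia. split; auto. split; auto.
  pose proof (Z.gcd_div_gcd P Q g ltac:(lia) eq_refl) as E.
  rewrite H1 in E. rewrite H2 in E.
  rewrite !Z.div_mul in E by lia. auto.
Qed.

Lemma OD P q : Z.odd q = true -> odd_den_rational (IZR P / IZR q).
Proof.
  intros Hq. right.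
  assert (Hq0 : q <> 0%Z) by (intro; subst; discriminate).
  set (g := Z.gcd P q).
  assert (Hg : g <> 0%Z) by (unfold g; intro h; apply Z.gcd_eq_0 in h; lia).
  pose proof (Z.gcd_div_gcd P q g Hg eq_refl) as E.
  destruct (Z.gcd_divide_l P q) as [k1 H1]. destruct (Z.gcd_divide_r P q) as [k2 H2].
  fold g in H1, H2. clearbody g.
  rewrite H1 in E. rewrite H2 in E. rewrite !Z.div_mul in E by lia.
  exists k1, k2. split; auto. split.
  - rewrite H2, Z.odd_mul in Hq. destruct (Z.odd k2); auto.
  - assert (k2 <> 0%Z) by (intro; subst; lia).
    rewrite H1, H2, !mult_IZR. field. split; apply not_0_IZR; auto.
Qed.

Lemma pigeon N (f : nat -> nat) : (forall k, (k <= N)%nat -> (f k < N)%nat) ->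
  exists i j, (i < j <= N)%nat /\ f i = f j.
Proof.
  revert f. induction N as [|N IH]; intros f Hf.
  - pose proof (Hf 0%nat (le_n 0)). lia.
  - destruct (classic (exists k, (k <= N)%nat /\ f k = f (S N))) as [[k [Hk E]]|Hn].
    + exists k, (S N). split. lia. auto.
    + set (g := fun k => if Nat.ltb (f k) (f (S N)) then f k else (f k - 1)%nat).
      destruct (IH g) as [i [j [Hij E]]].
      { intros k Hk. unfold g. assert (f k <> f (S N)) by (intro; apply Hn; exists k; split; auto).
        pose proof (Hf k ltac:(lia)). pose proof (Hf (S N) (le_n _)).
        destruct (Nat.ltb_spec (f k) (f (S N))); lia. }
      exists i, j. split. lia.
      assert (f i <> f (S N)) by (intro; apply Hn; exists i; split; [lia|auto]).
      assert (f j <> f (S N)) by (intro; apply Hn; exists j; split; [lia|auto]).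
      unfold g in E. destruct (Nat.ltb_spec (f i) (f (S N))); destruct (Nat.ltb_spec (f j) (f (S N))); lia.
Qed.

Lemma dirichlet r d : 0 < d -> exists n P, (1 <= n)%nat /\ Rabs (INR n * r - IZR P) < d.
Proof.
  intros Hd. destruct (small_inv d Hd) as [N [HN1 HN2]]. pose proof (HN2 N (le_n N)) as HN.
  assert (HNp : 0 < INR N) by (apply lt_0_INR; lia).
  set (fr := fun k : nat => INR k * r - IZR (fl (INR k * r))).
  assert (Hfr : forall k, 0 <= fr k < 1) by (intro k; unfold fr; destruct (fl_spec (INR k * r)); lra).
  set (b := fun k => Z.to_nat (fl (INR N * fr k))).
  assert (Hb : forall k, IZR (Z.of_nat (b k)) <= INR N * fr k < IZR (Z.of_nat (b k)) + 1).
  { intro k. unfold b. rewrite Z2Nat.id. apply fl_spec.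
    destruct (fl_spec (INR N * fr k)). pose proof (Hfr k).
    assert (hh : -1 < IZR (fl (INR N * fr k))) by nra. apply lt_IZR in hh. lia. }
  destruct (pigeon N b) as [i [j [Hij E]]].
  { intros k Hk. pose proof (Hb k). pose proof (Hfr k).
    assert (INR N * fr k < INR N * 1) by (apply Rmult_lt_compat_l; lra).
    assert (hh : IZR (Z.of_nat (b k)) < IZR (Z.of_nat N)) by (rewrite <- (INR_IZR_INZ N); lra).
    apply lt_IZR in hh. lia. }
  exists (j - i)%nat, (fl (INR j * r) - fl (INR i * r))%Z. split. lia.
  rewrite minus_INR by lia. rewrite minus_IZR.
  pose proof (Hb i). pose proof (Hb j). rewrite E in H.
  assert (Rabs (fr j - fr i) < 1 / INR N).
  { assert (Rabs (INR N * (fr j - fr i)) < 1) by (apply Rabs_def1; lra).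
    rewrite Rabs_mult, Rabs_pos_eq in H1 by lra.
    apply (Rmult_lt_reg_l (INR N)); auto. replace (INR N * (1 / INR N)) with 1 by (field; lra). auto. }
  unfold fr in H1.
  replace ((INR j - INR i) * r - (IZR (fl (INR j * r)) - IZR (fl (INR i * r))))
    with (INR j * r - IZR (fl (INR j * r)) - (INR i * r - IZR (fl (INR i * r)))) by ring.
  lra.
Qed.

Section Main.
Variables (F : R -> R -> R) (u1 u2 : R).
Hypothesis Hu : u1 < u2.
Hypothesis HT : forall u, u1 <= u <= u2 -> trap_type (F u).
Hypothesis Hc : forall u, u1 <= u <= u2 -> forall eps, 0 < eps -> exists delta, 0 < delta /\
     forall v, u1 <= v <= u2 -> Rabs (v - u) < delta ->
       forall x, Rabs (F v x - F u x) < eps.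
Hypothesis Hm : forall u v, u1 <= u -> u < v -> v <= u2 -> forall x, F u x < F v x.

Let rho u := rot (F u).

Lemma Flift u : u1 <= u <= u2 -> circle_homeo_lift (F u).
Proof.
  intro H. destruct (HT u H) as [al [th [a0 [a1 [_ [_ [_ [HF _]]]]]]]]. auto.
Qed.

Lemma rho_mono x y : u1 <= x -> x <= y -> y <= u2 -> rho x <= rho y.
Proof.
  intros h1 h2 h3. destruct (Req_dec x y) as [->|hne]. lra.
  apply rot_mono. apply Flift; lra. apply Flift; lra.
  intro z. left. apply Hm; lra.
Qed.

Lemma rho_cont x : u1 <= x <= u2 -> forall eps, 0 < eps -> exists d, 0 < d /\
  forall y, u1 <= y <= u2 -> Rabs (y - x) < d -> Rabs (rho y - rho x) < eps.
Proof.
  intros Hx eps He. destruct (rot_cont (F x) (Flift x Hx) eps He) as [eta [Heta H]].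
  destruct (Hc x Hx eta Heta) as [d [Hd H2]]. exists d. split; auto.
  intros y Hy Hyx. apply H. apply Flift; auto. apply H2; auto.
Qed.

Lemma rho_ivt a b r : u1 <= a -> a <= b -> b <= u2 -> rho a <= r <= rho b ->
  exists c, a <= c <= b /\ rho c = r.
Proof.
  intros ha hab hb hr.
  set (E := fun t => a <= t <= b /\ rho t <= r).
  assert (Eb : bound E) by (exists b; intros t [h _]; lra).
  assert (Ea : E a) by (split; lra).
  destruct (completeness E Eb (ex_intro _ a Ea)) as [c [Hub Hlub]].
  assert (a <= c) by (apply Hub; auto).
  assert (c <= b) by (apply Hlub; intros t [h _]; lra).
  exists c. split. lra.
  destruct (Rtotal_order (rho c) r) as [h|[h|h]]; auto; exfalso.
  - destruct (rho_cont c ltac:(lra) (r - rho c)) as [d [Hd H2]]. lra.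
    assert (c < b). { destruct (Req_dec c b) as [->|hh]. lra. lra. }
    set (t := Rmin (c + d / 2) b).
    assert (t <= c + d/2) by (unfold t; apply Rmin_l).
    assert (t <= b) by (unfold t; apply Rmin_r).
    assert (c < t) by (unfold t; apply Rmin_glb_lt; lra).
    assert (E t). { split. lra. pose proof (H2 t ltac:(lra) ltac:(apply Rabs_def1; lra)).
      apply Rabs_def2 in H6. lra. }
    apply Hub in H6. lra.
  - destruct (rho_cont c ltac:(lra) (rho c - r)) as [d [Hd H2]]. lra.
    assert (~ (forall t, E t -> t <= c - d / 2)).
    { intro H3. assert (c <= c - d/2) by (apply Hlub; auto). lra. }
    apply not_all_ex_not in H1. destruct H1 as [t Ht].
    apply imply_to_and in Ht. destruct Ht as [[Et1 Et2] Ht].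
    assert (t <= c) by (apply Hub; split; auto).
    pose proof (H2 t ltac:(lra) ltac:(apply Rabs_def1; lra)). apply Rabs_def2 in H3. lra.
Qed.

Lemma odd_form r : odd_den_rational r -> exists n P, (1 <= n)%nat /\ Nat.even n = false /\ INR n * r = IZR P.
Proof.
  intros [->|[p [q [Hg [Hq ->]]]]].
  - exists 1%nat, 0%Z. split. lia. split. auto. simpl. ring.
  - assert (Hq0 : q <> 0%Z) by (intro; subst; discriminate).
    destruct (Z_lt_le_dec 0 q) as [h|h].
    + exists (Z.to_nat q), p. split. lia. split.
      rewrite <- Zeven_nat, Z2Nat.id by lia. rewrite <- Z.negb_odd, Hq. auto.
      rewrite INR_IZR_INZ, Z2Nat.id by lia. field. apply not_0_IZR; auto.
    + exists (Z.to_nat (- q)), (- p)%Z. split. lia. split.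
      rewrite <- Zeven_nat, Z2Nat.id by lia. rewrite <- Z.negb_odd, Z.odd_opp, Hq. auto.
      rewrite INR_IZR_INZ, Z2Nat.id by lia. rewrite !opp_IZR. field. apply not_0_IZR; auto.
Qed.

Lemma plateau_at a b r : u1 <= a -> a < b -> b <= u2 -> rho a < r < rho b -> odd_den_rational r ->
  exists c d, a <= c /\ c < d /\ d <= b /\ forall w, c <= w <= d -> rho w = r.
Proof.
  intros ha hab hb hr Hodd.
  destruct (rho_ivt a b r) as [u [Hu1 Hu2]]; try lra.
  assert (a < u) by (destruct (Req_dec a u) as [<-|hh]; lra).
  assert (u < b) by (destruct (Req_dec u b) as [->|hh]; lra).
  assert (Hul : u1 <= u <= u2) by lra.
  destruct (odd_form r Hodd) as [n [P [Hn1 [Hn2 HnP]]]].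
  pose proof (Flift u Hul) as HFu.
  assert (Hr : INR n * rot (F u) = IZR P) by (unfold rho in Hu2; rewrite Hu2; auto).
  assert (Hnz : 0 < INR n) by (apply lt_0_INR; lia).
  assert (NI : exists x0, iterR n (F u) x0 <> x0 + IZR P).
  { apply NNPP. intro H1. destruct (trap_PL (F u) (HT u Hul)) as [L [a0 [a1 HP]]].
    assert (forall x, iterR n (F u) x = x + IZR P).
    { intro x. apply NNPP. intro h. apply H1. exists x; auto. }
    pose proof (odd_not_id _ _ _ _ HP n (IZR P) H2). congruence. }
  destruct NI as [x0 Hx0].
  destruct (exists_periodic (F u) HFu n (IZR P) Hn1 Hr) as [y Hy].
  assert (Hconv : forall w, u1 <= w <= u2 -> (exists z, iterR n (F w) z = z + IZR P) -> rho w = r).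
  { intros w Hw [z Hz]. pose proof (per_rot (F w) (Flift w Hw) n z P Hn1 Hz).
    unfold rho. apply (Rmult_eq_reg_l (INR n)); lra. }
  destruct n as [|m]. lia.
  destruct (Rtotal_order (iterR (S m) (F u) x0) (x0 + IZR P)) as [h|[h|h]]; [|contradiction|].
  -
    set (g := x0 + IZR P - iterR (S m) (F u) x0).
    destruct (IC (F u) (proj1 HFu) (S m) x0 g) as [eta [Heta Hic]]. unfold g; lra.
    destruct (Hc u Hul eta Heta) as [d [Hd Hd2]].
    exists u, (Rmin b (u + d / 2)). split. lra. split. apply Rmin_glb_lt; lra. split. apply Rmin_l.
    intros w Hw. pose proof (Rmin_l b (u + d/2)). pose proof (Rmin_r b (u + d/2)).
    destruct (Req_dec w u) as [->|hne]. auto.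
    apply Hconv. lra. apply (sc (F w) (Flift w ltac:(lra))).
    + exists y. assert (iterR (S m) (F u) y < iterR (S m) (F w) y).
      { apply it_strict. apply Flift; lra. intro x; apply Hm; lra. }
      lra.
    + exists x0. assert (HH := Hic (F w) (Hd2 w ltac:(lra) ltac:(apply Rabs_def1; lra))).
      apply Rabs_def2 in HH. unfold g in HH. lra.
  -
    set (g := iterR (S m) (F u) x0 - (x0 + IZR P)).
    destruct (IC (F u) (proj1 HFu) (S m) x0 g) as [eta [Heta Hic]]. unfold g; lra.
    destruct (Hc u Hul eta Heta) as [d [Hd Hd2]].
    exists (Rmax a (u - d / 2)), u. split. apply Rmax_l. split. apply Rmax_lub_lt; lra. split. lra.
    intros w Hw. pose proof (Rmax_l a (u - d/2)). pose proof (Rmax_r a (u - d/2)).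
    destruct (Req_dec w u) as [->|hne]. auto.
    apply Hconv. lra. apply (sc (F w) (Flift w ltac:(lra))).
    + exists x0. assert (HH := Hic (F w) (Hd2 w ltac:(lra) ltac:(apply Rabs_def1; lra))).
      apply Rabs_def2 in HH. unfold g in HH. lra.
    + exists y. assert (iterR (S m) (F w) y < iterR (S m) (F u) y).
      { apply it_strict. apply Flift; lra. intro x; apply Hm; lra. }
      lra.
Qed.

Lemma part3 c d : u1 <= c -> c < d -> d <= u2 -> (forall u, c <= u <= d -> rho u = rho c) ->
  odd_den_rational (rho c).
Proof.
  intros hc hcd hd Hpl.
  set (r := rho c).
  assert (Hrd : rho d = r) by (apply Hpl; lra).
  pose proof (Flift c ltac:(lra)) as HFc. pose proof (Flift d ltac:(lra)) as HFd.
  destruct (minper (fun x => F d x - F c x)) as [del [Hdel Hdel2]].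
  { intro x. apply continuity_pt_minus; [apply HFd| apply HFc]. }
  { intro x. destruct HFc as [_ [_ Hc1]]. destruct HFd as [_ [_ Hd1]]. rewrite Hc1, Hd1. ring. }
  { intro x. pose proof (Hm c d hc hcd hd x). lra. }
  assert (Hgap : forall x, F c x + del <= F d x) by (intro x; pose proof (Hdel2 x); simpl in *; lra).
  destruct (dirichlet r del Hdel) as [n [P [Hn HnP]]].
  destruct n as [|m]. lia.
  destruct (Req_dec (INR (S m) * r) (IZR P)) as [E|E].
  - destruct (RED P (Z.of_nat (S m))) as [g [p' [q' [Hg [Hq' [E1 [E2 Hgcd]]]]]]]. lia.
    assert (Hr : IZR q' * r = IZR p').
    { apply (Rmult_eq_reg_l (IZR g)). rewrite INR_IZR_INZ, E2, E1, !mult_IZR in E. lra.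
      apply not_0_IZR; lia. }
    destruct (Z.odd q') eqn:Hodd.
    + right. exists p', q'. split; auto. split; auto.
      fold r. apply (Rmult_eq_reg_l (IZR q')). rewrite Hr. field. apply not_0_IZR; lia.
      apply not_0_IZR; lia.
    + exfalso. destruct (trap_PL (F c) (HT c ltac:(lra))) as [L [a0 [a1 HP]]].
      assert (Hev : Nat.even (Z.to_nat q') = true).
      { rewrite <- Zeven_nat, Z2Nat.id by lia. rewrite <- Z.negb_odd, Hodd. auto. }
      assert (HrZ : INR (Z.to_nat q') * rot (F c) = IZR p').
      { rewrite INR_IZR_INZ, Z2Nat.id by lia. auto. }
      pose proof (even_id (F c) L a0 a1 HP (Z.to_nat q') p' ltac:(lia) Hev
        ltac:(rewrite Z2Nat.id by lia; auto) HrZ) as Hid.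
      destruct (Z.to_nat q') as [|k] eqn:Hk. lia.
      assert (forall x, IZR p' + del <= iterR (S k) (F d) x - x).
      { intro x. pose proof (it_gap (F c) (F d) del HFc ltac:(lra) Hgap k x). rewrite Hid in H. lra. }
      pose proof (lb (F d) HFd (S k) _ ltac:(lia) H).
      unfold r, rho in *. rewrite Hrd in H0. lra.
  - exfalso. set (n := S m) in *.
    assert (Hn1 : (1 <= n)%nat) by (unfold n; lia).
    destruct (Rlt_dec (INR n * r) (IZR P)) as [h|h].
    + destruct (exists_above (F c) HFc n (INR n * r) Hn1 ltac:(unfold r, rho; lra)) as [x0 Hx0].
      destruct (exists_below (F d) HFd n (INR n * r) Hn1 ltac:(unfold rho in Hrd; rewrite Hrd; lra)) as [x1 Hx1].
      destruct (sc (F d) HFd n (IZR P)) as [z Hz].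
      * exists x0. pose proof (it_gap (F c) (F d) del HFc ltac:(lra) Hgap m x0).
        apply Rabs_def2 in HnP. unfold n in *. lra.
      * exists x1. lra.
      * pose proof (per_rot (F d) HFd n z P Hn1 Hz). unfold rho in Hrd. rewrite Hrd in H. lra.
    + destruct (exists_above (F c) HFc n (INR n * r) Hn1 ltac:(unfold r, rho; lra)) as [x0 Hx0].
      destruct (exists_below (F d) HFd n (INR n * r) Hn1 ltac:(unfold rho in Hrd; rewrite Hrd; lra)) as [x1 Hx1].
      destruct (sc (F c) HFc n (IZR P)) as [z Hz].
      * exists x0. lra.
      * exists x1. pose proof (it_gap (F c) (F d) del HFc ltac:(lra) Hgap m x1).
        apply Rabs_def2 in HnP. unfold n in *. lra.
      * pose proof (per_rot (F c) HFc n z P Hn1 Hz). unfold r, rho in E. lra.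
Qed.

Lemma density x : u1 <= x <= u2 -> forall eps, 0 < eps ->
  exists c d, u1 <= c /\ c < d /\ d <= u2 /\ (forall y, c <= y <= d -> rho y = rho c) /\
  exists z, c <= z <= d /\ Rabs (z - x) < eps.
Proof.
  intros Hx eps He.
  set (a := Rmax u1 (x - eps / 2)). set (b := Rmin u2 (x + eps / 2)).
  assert (a1 : u1 <= a) by apply Rmax_l. assert (a2 : x - eps/2 <= a) by apply Rmax_r.
  assert (b1 : b <= u2) by apply Rmin_l. assert (b2 : b <= x + eps/2) by apply Rmin_r.
  assert (a3 : a <= x) by (apply Rmax_lub; lra). assert (b3 : x <= b) by (apply Rmin_glb; lra).
  assert (ab : a < b). { unfold a, b. apply Rmax_lub_lt; apply Rmin_glb_lt; lra. }
  pose proof (rho_mono a b ltac:(lra) ltac:(lra) ltac:(lra)) as Hab.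
  destruct (Req_dec (rho a) (rho b)) as [E|E].
  - exists a, b. split; auto. split; auto. split; auto. split.
    + intros y Hy. pose proof (rho_mono a y ltac:(lra) ltac:(lra) ltac:(lra)).
      pose proof (rho_mono y b ltac:(lra) ltac:(lra) ltac:(lra)). lra.
    + exists x. split. lra. rewrite Rminus_diag, Rabs_R0; auto.
  - destruct (small_inv (rho b - rho a)) as [N [HN1 HN2]]. lra.
    set (q := (2 * Z.of_nat N + 1)%Z).
    assert (Hq : IZR q = 2 * INR N + 1) by (unfold q; rewrite plus_IZR, mult_IZR, <- INR_IZR_INZ; auto).
    assert (HNq : INR N <= IZR q) by (rewrite Hq; pose proof (pos_INR N); lra).
    assert (HN := HN2 N (le_n N)).
    assert (Npos : 0 < INR N) by (apply lt_0_INR; lia).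
    set (P := (fl (rho a * IZR q) + 1)%Z).
    destruct (fl_spec (rho a * IZR q)) as [f1 f2].
    assert (HqP : 0 < IZR q) by lra.
    assert (HP1 : rho a * IZR q < IZR P) by (unfold P; rewrite plus_IZR; lra).
    assert (HP2 : IZR P <= rho a * IZR q + 1) by (unfold P; rewrite plus_IZR; lra).
    assert (r1 : rho a < IZR P / IZR q).
    { apply (Rmult_lt_reg_r (IZR q)); auto. unfold Rdiv. rewrite Rmult_assoc, Rinv_l by lra. lra. }
    assert (r2 : IZR P / IZR q < rho b).
    { apply (Rmult_lt_reg_r (IZR q)); auto. unfold Rdiv. rewrite Rmult_assoc, Rinv_l by lra.
      assert (1 < (rho b - rho a) * IZR q).
      { assert (hA : 1 / INR N * INR N < (rho b - rho a) * INR N) by (apply Rmult_lt_compat_r; lra).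
        assert (hB : (rho b - rho a) * INR N <= (rho b - rho a) * IZR q) by (apply Rmult_le_compat_l; lra).
        replace (1 / INR N * INR N) with 1 in hA by (field; lra). lra. }
      lra. }
    assert (Hodd : odd_den_rational (IZR P / IZR q)).
    { apply OD. unfold q. rewrite Z.add_comm, Z.odd_add_mul_2. auto. }
    destruct (plateau_at a b (IZR P / IZR q)) as [c [d [h1 [h2 [h3 h4]]]]]; try (split; lra); try lra; auto.
    exists c, d. split. lra. split; auto. split. lra. split.
    + intros y Hy. rewrite (h4 y Hy), (h4 c); auto. lra.
    + exists c. split. lra. apply Rabs_def1; lra.
Qed.

End Main.

Theorem theorem3p3 (F : R -> R -> R) (u1 u2 : R) :
  u1 < u2 ->
  (forall u, u1 <= u <= u2 -> trap_type (F u)) ->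
  (forall u, u1 <= u <= u2 -> forall eps, 0 < eps -> exists delta, 0 < delta /\
     forall v, u1 <= v <= u2 -> Rabs (v - u) < delta ->
       forall x, Rabs (F v x - F u x) < eps) ->
  (forall u v, u1 <= u -> u < v -> v <= u2 -> forall x, F u x < F v x) ->
  rot (F u1) < rot (F u2) ->
  devils_staircase (fun u => rot (F u)) u1 u2 /\
  (forall r, rot (F u1) <= r <= rot (F u2) ->
     exists u, u1 <= u <= u2 /\ rot (F u) = r) /\
  (forall c d, u1 <= c -> c < d -> d <= u2 ->
     (forall u, c <= u <= d -> rot (F u) = rot (F c)) ->
     odd_den_rational (rot (F c))) /\
  (forall r, rot (F u1) < r < rot (F u2) -> odd_den_rational r ->
     exists c d, u1 <= c /\ c < d /\ d <= u2 /\
       forall u, c <= u <= d -> rot (F u) = r).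
Proof.
  intros Hu HT Hc Hm Hr.
  split; [|split; [|split]].
  - split; [|split; [|split]].
    + intros x y hx hxy hy. apply (rho_mono F u1 u2 HT Hm); auto.
    + intros x Hx eps He. apply (rho_cont F u1 u2 HT Hc); auto.
    + exists u1, u2. split. lra. split. lra. lra.
    + intros x Hx eps He. apply (density F u1 u2 Hu HT Hc Hm); auto.
  - intros r Hr2. apply (rho_ivt F u1 u2 HT Hc); lra.
  - intros c d hc hcd hd Hpl. apply (part3 F u1 u2 HT Hm c d); auto.
  - intros r Hr2 Hodd. apply (plateau_at F u1 u2 HT Hc Hm u1 u2 r); auto; lra.
Qed.
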